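(* Let $(X_t)_{t\ge0}$ be the continuous-time random walk on $\mathbb{Z}$ started at $0$ with generator $(Lf)(x)=\frac12\left(f(x+1)-f(x)\right)+\frac12\left(f(x-1)-f(x)\right)$. Then there is a universal constant $c>0$ such that for all $t\ge0$, $\mathrm{Varent}(X_t)\ge c\,\mathcal{V}(t)$, where $\mathcal{V}(t)=t\log^2\!\left(1+\frac1{\sqrt t}\right)$ (and $\mathcal{V}(0)=0$).
   Context: For a discrete random variable $X$ with probability mass function $f$, $\mathrm{Varent}(X):=\mathrm{Var}(\log f(X))$. *)

(* Defs.v *)
From Stdlib Require Import Reals ZArith.
From Coquelicot Require Import Coquelicot.
Open Scope R_scope.

(* Discrete-time simple symmetric random walk on Z started at 0:
   P(S_n = k) = C(n, (n+k)/2) / 2^n  if |k| <= n and n+k even, else 0. *)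
Definition srw_pmf (n : nat) (k : Z) : R :=
  if andb (Z.abs k <=? Z.of_nat n)%Z (Z.even (Z.of_nat n + k))
  then Binomial.C n (Z.to_nat ((Z.of_nat n + k) / 2)) / 2 ^ n
  else 0.

(* Continuous-time random walk with generator
   (Lf)(x) = 1/2 (f(x+1)-f(x)) + 1/2 (f(x-1)-f(x)), started at 0.
   Total jump rate 1, each jump +-1 with prob. 1/2, so X_t = S_{N_t} with
   N_t ~ Poisson(t) independent of S (uniformization):
   P(X_t = k) = sum_n e^{-t} t^n / n! * P(S_n = k). *)
Definition ctrw_pmf (t : R) (k : Z) : R :=
  Series (fun n : nat => exp (- t) * t ^ n / INR (fact n) * srw_pmf n k).

Definition sumZ (f : Z -> R) : R :=
  Series (fun n : nat => f (Z.of_nat n)) + Series (fun n : nat => f (- Z.of_nat (S n))%Z).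

Definition expectZ (p : Z -> R) (g : Z -> R) : R := sumZ (fun k => p k * g k).

Definition varZ (p : Z -> R) (g : Z -> R) : R :=
  expectZ p (fun k => (g k - expectZ p g) ^ 2).

Definition varent (p : Z -> R) : R := varZ p (fun k => ln (p k)).

Definition calV (t : R) : R :=
  if Req_EM_T t 0 then 0 else t * (ln (1 + / sqrt t)) ^ 2.

(* Main.v *)
Require Import Defs.
From Stdlib Require Import Reals ZArith.
From Coquelicot Require Import Coquelicot.
Open Scope R_scope.
From Stdlib Require Import Lia Lra Classical.



Definition form (n : nat) (k : Z) : Prop :=
  exists j, (j <= n)%nat /\ k = (2 * Z.of_nat j - Z.of_nat n)%Z.

Lemma srw_at n j : (j <= n)%nat ->
  srw_pmf n (2 * Z.of_nat j - Z.of_nat n)%Z = Binomial.C n j / 2 ^ n.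
Proof.
  intros Hj. unfold srw_pmf.
  replace (Z.of_nat n + (2 * Z.of_nat j - Z.of_nat n))%Z with (Z.of_nat j * 2)%Z by ring.
  rewrite Z.div_mul by lia. rewrite Nat2Z.id.
  replace (Z.even (Z.of_nat j * 2)) with true.
  2:{ rewrite Z.mul_comm. symmetry. apply Z.even_mul. }
  replace (Z.abs (2 * Z.of_nat j - Z.of_nat n) <=? Z.of_nat n)%Z with true.
  reflexivity. symmetry. apply Z.leb_le. lia.
Qed.

Lemma srw_zero n k : ~ form n k -> srw_pmf n k = 0.
Proof.
  intros Hf. unfold srw_pmf.
  destruct (Z.abs k <=? Z.of_nat n)%Z eqn:E1; simpl; [|reflexivity].
  destruct (Z.even (Z.of_nat n + k)) eqn:E2; [|reflexivity].
  exfalso. apply Hf. apply Z.leb_le in E1.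
  apply Z.even_spec in E2. destruct E2 as [m Hm].
  exists (Z.to_nat m). split; lia.
Qed.

Lemma form_dec n k : form n k \/ ~ form n k.
Proof. apply classic. Qed.

Lemma srw_0 k : srw_pmf 0 k = if Z.eq_dec k 0 then 1 else 0.
Proof.
  destruct (Z.eq_dec k 0).
  - subst. change 0%Z with (2 * Z.of_nat 0 - Z.of_nat 0)%Z. rewrite srw_at by lia.
    simpl. unfold Binomial.C. simpl; field; try (apply pow_nonzero; lra).
  - apply srw_zero. intros [j [Hj ->]]. lia.
Qed.

Lemma C_n_n' n : Binomial.C n n = 1.
Proof. unfold Binomial.C. rewrite Nat.sub_diag. simpl; field; try (apply pow_nonzero; lra). apply INR_fact_neq_0. Qed.

Lemma srw_S n k : srw_pmf (S n) k = (srw_pmf n (k - 1) + srw_pmf n (k + 1)) / 2.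
Proof.
  destruct (form_dec (S n) k) as [[j [Hj ->]] | Hf].
  - rewrite srw_at by lia.
    destruct (Nat.eq_dec j 0) as [Hj0|Hj0]; [subst j|].
    + rewrite (srw_zero n (_ - 1)). 2:{ intros [i [Hi Hi']]. lia. }
      replace (2 * Z.of_nat 0 - Z.of_nat (S n) + 1)%Z with (2 * Z.of_nat 0 - Z.of_nat n)%Z by lia.
      rewrite srw_at by lia. rewrite !C_n_0. simpl; field; try (apply pow_nonzero; lra).
    + destruct (Nat.eq_dec j (S n)) as [HjS|HjS]; [subst j|].
      * rewrite (srw_zero n (_ + 1)). 2:{ intros [i [Hi Hi']]. lia. }
        replace (2 * Z.of_nat (S n) - Z.of_nat (S n) - 1)%Z with (2 * Z.of_nat n - Z.of_nat n)%Z by lia.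
        rewrite srw_at by lia. rewrite !C_n_n'. simpl; field; try (apply pow_nonzero; lra).
      * destruct j as [|j]; [lia|].
        replace (2 * Z.of_nat (S j) - Z.of_nat (S n) - 1)%Z with (2 * Z.of_nat j - Z.of_nat n)%Z by lia.
        replace (2 * Z.of_nat (S j) - Z.of_nat (S n) + 1)%Z with (2 * Z.of_nat (S j) - Z.of_nat n)%Z by lia.
        rewrite !srw_at by lia. rewrite <- pascal by lia. simpl; field; try (apply pow_nonzero; lra).
  - rewrite srw_zero by assumption.
    rewrite (srw_zero n (k - 1)). 2:{ intros [i [Hi Hi']]. apply Hf. exists (S i). split; lia. }
    rewrite (srw_zero n (k + 1)). 2:{ intros [i [Hi Hi']]. apply Hf. exists i. split; lia. }
    field.
Qed.

Lemma srw_nonneg n k : 0 <= srw_pmf n k.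
Proof.
  revert k; induction n; intros k.
  - rewrite srw_0. destruct Z.eq_dec; lra.
  - rewrite srw_S. specialize (IHn (k-1)%Z) as H1. specialize (IHn (k+1)%Z). lra.
Qed.

Lemma srw_le1 n k : srw_pmf n k <= 1.
Proof.
  revert k; induction n; intros k.
  - rewrite srw_0. destruct Z.eq_dec; lra.
  - rewrite srw_S. specialize (IHn (k-1)%Z) as H1. specialize (IHn (k+1)%Z). lra.
Qed.

Lemma srw_supp n k : (Z.of_nat n < Z.abs k)%Z -> srw_pmf n k = 0.
Proof.
  revert k; induction n; intros k Hk.
  - rewrite srw_0. destruct Z.eq_dec; [lia|lra].
  - rewrite srw_S. rewrite !IHn by lia. lra.
Qed.

Lemma srw_sym n k : srw_pmf n (- k) = srw_pmf n k.
Proof.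
  revert k; induction n; intros k.
  - rewrite !srw_0. destruct Z.eq_dec; destruct Z.eq_dec; try lra; lia.
  - rewrite !srw_S. replace (- k - 1)%Z with (- (k + 1))%Z by ring.
    replace (- k + 1)%Z with (- (k - 1))%Z by ring. rewrite !IHn. lra.
Qed.

Lemma srw_top n : srw_pmf n (Z.of_nat n) = / 2 ^ n.
Proof.
  induction n.
  - rewrite srw_0. destruct (Z.eq_dec (Z.of_nat 0) 0); [simpl; lra|lia].
  - rewrite srw_S. replace (Z.of_nat (S n) - 1)%Z with (Z.of_nat n) by lia.
    rewrite (srw_supp n (Z.of_nat (S n) + 1)) by lia. rewrite IHn. simpl.
    field. apply pow_nonzero; lra.
Qed.

Lemma srw_stein n k :
  IZR k * srw_pmf (S n) k = INR (S n) / 2 * (srw_pmf n (k - 1) - srw_pmf n (k + 1)).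
Proof.
  revert k; induction n; intros k.
  - rewrite srw_S, !srw_0. simpl INR.
    destruct (Z.eq_dec (k-1) 0); destruct (Z.eq_dec (k+1) 0); try lia.
    + assert (k = 1%Z) by lia. subst. simpl. lra.
    + assert (k = (-1)%Z) by lia. subst. simpl. lra.
    + lra.
  - pose proof (IHn (k - 1)%Z) as H1. pose proof (IHn (k + 1)%Z) as H2.
    rewrite srw_S.
    replace (k - 1 + 1)%Z with k in H1 by ring.
    replace (k + 1 - 1)%Z with k in H2 by ring.
    rewrite minus_IZR in H1. rewrite plus_IZR in H2.
    rewrite (srw_S n (k - 1)), (srw_S n (k + 1)) in *.
    replace (k - 1 + 1)%Z with k in * by ring.
    replace (k + 1 - 1)%Z with k in * by ring.
    rewrite !S_INR in *. lra.
Qed.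


Definition summ (f : Z -> R) : Prop :=
  ex_series (fun n => Rabs (f (Z.of_nat n))) /\
  ex_series (fun n => Rabs (f (- Z.of_nat (S n))%Z)).

Lemma Series_nonneg' (a : nat -> R) : (forall n, 0 <= a n) -> 0 <= Series a.
Proof.
  intros H. unfold Series.
  assert (Hl : Rbar_le (Lim_seq (fun _ => 0)) (Lim_seq (sum_n a))).
  { apply Lim_seq_le_loc. exists 0%nat. intros n _.
    induction n. rewrite sum_O. apply H. rewrite sum_Sn. apply Rplus_le_le_0_compat; auto. }
  rewrite Lim_seq_const in Hl.
  destruct (Lim_seq (sum_n a)); simpl in *; lra.
Qed.

Lemma Series_le_gen (a b : nat -> R) : ex_series a -> ex_series b ->
  (forall n, a n <= b n) -> Series a <= Series b.
Proof.
  intros Ha Hb H.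
  assert (0 <= Series (fun n => b n - a n)) by (apply Series_nonneg'; intros n; specialize (H n); lra).
  rewrite Series_minus in H0 by assumption. lra.
Qed.

Lemma ex_series_dom (a b : nat -> R) : (forall n, Rabs (a n) <= b n) -> ex_series b -> ex_series a.
Proof. intros H Hb. apply (ex_series_le a b); auto. Qed.

Lemma summ_ex f : summ f -> ex_series (fun n => f (Z.of_nat n)) /\ ex_series (fun n => f (- Z.of_nat (S n))%Z).
Proof. intros [H1 H2]. split; apply ex_series_Rabs; assumption. Qed.

Lemma summ_dom f g : (forall k, Rabs (f k) <= g k) -> summ g -> summ f.
Proof.
  intros H [H1 H2]. split.
  - apply (ex_series_dom _ (fun n => Rabs (g (Z.of_nat n)))); auto.
    intros n. rewrite Rabs_Rabsolu. specialize (H (Z.of_nat n)). pose proof (Rle_abs (g (Z.of_nat n))). lra.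
  - apply (ex_series_dom _ (fun n => Rabs (g (- Z.of_nat (S n))%Z))); auto.
    intros n. rewrite Rabs_Rabsolu. specialize (H (- Z.of_nat (S n))%Z). pose proof (Rle_abs (g (- Z.of_nat (S n))%Z)). lra.
Qed.

Lemma exR_incr1 (a : nat -> R) : ex_series a -> ex_series (fun k => a (S k)).
Proof. intros H. apply ex_series_incr_1 in H. exact H. Qed.

Lemma ex_series_scalR (c : R) (a : nat -> R) : ex_series a -> ex_series (fun n => c * a n).
Proof. intros H. exact (ex_series_scal_l c a H). Qed.

Lemma ex_series_lin (a b : nat -> R) (x y : R) : ex_series a -> ex_series b -> ex_series (fun n => x * a n + y * b n).
Proof.
  intros Ha Hb. apply (ex_series_plus (fun n => x * a n) (fun n => y * b n)).
  apply (ex_series_scal_l x a); auto. apply (ex_series_scal_l y b); auto.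
Qed.

Lemma summ_lin f g x y : summ f -> summ g -> summ (fun k => x * f k + y * g k).
Proof.
  intros Hf Hg.
  apply (summ_dom _ (fun k => Rabs x * Rabs (f k) + Rabs y * Rabs (g k))).
  - intros k. eapply Rle_trans. apply Rabs_triang. rewrite !Rabs_mult. lra.
  - destruct Hf as [F1 F2], Hg as [G1 G2]. split.
    + apply (ex_series_dom _ (fun n => Rabs x * Rabs (f (Z.of_nat n)) + Rabs y * Rabs (g (Z.of_nat n)))).
      * intros n. rewrite Rabs_Rabsolu. rewrite Rabs_pos_eq. lra.
        pose proof (Rabs_pos x); pose proof (Rabs_pos y); pose proof (Rabs_pos (f (Z.of_nat n))); pose proof (Rabs_pos (g (Z.of_nat n))). nra.
      * apply ex_series_lin; auto.
    + apply (ex_series_dom _ (fun n => Rabs x * Rabs (f (- Z.of_nat (S n))%Z) + Rabs y * Rabs (g (- Z.of_nat (S n))%Z))).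
      * intros n. rewrite Rabs_Rabsolu. rewrite Rabs_pos_eq. lra.
        pose proof (Rabs_pos x); pose proof (Rabs_pos y); pose proof (Rabs_pos (f (- Z.of_nat (S n))%Z)); pose proof (Rabs_pos (g (- Z.of_nat (S n))%Z)). nra.
      * apply ex_series_lin; auto.
Qed.

Lemma summ_ext f g : (forall k, f k = g k) -> summ g -> summ f.
Proof. intros H Hg. apply (summ_dom _ (fun k => Rabs (g k))). intros k; rewrite H; lra.
  destruct Hg as [G1 G2]. split.
  eapply ex_series_ext. 2: apply G1. intros n; simpl; rewrite Rabs_Rabsolu; reflexivity.
  eapply ex_series_ext. 2: apply G2. intros n; simpl; rewrite Rabs_Rabsolu; reflexivity. Qed.

Lemma summ_scal f x : summ f -> summ (fun k => x * f k).
Proof.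
  intros Hf. apply (summ_ext _ (fun k => x * f k + 0 * f k)).
  intros k. ring. apply summ_lin; auto.
Qed.

Lemma summ_plus f g : summ f -> summ g -> summ (fun k => f k + g k).
Proof.
  intros Hf Hg. apply (summ_ext _ (fun k => 1 * f k + 1 * g k)).
  intros k. ring. apply summ_lin; auto.
Qed.

Lemma summ_minus f g : summ f -> summ g -> summ (fun k => f k - g k).
Proof.
  intros Hf Hg. apply (summ_ext _ (fun k => 1 * f k + (-1) * g k)).
  intros k. ring. apply summ_lin; auto.
Qed.

Lemma sumZ_ext f g : (forall k, f k = g k) -> sumZ f = sumZ g.
Proof. intros H. unfold sumZ. f_equal; apply Series_ext; intros; apply H. Qed.

Lemma sumZ_lin f g x y : summ f -> summ g ->
  sumZ (fun k => x * f k + y * g k) = x * sumZ f + y * sumZ g.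
Proof.
  intros Hf Hg. apply summ_ex in Hf as [F1 F2]. apply summ_ex in Hg as [G1 G2].
  unfold sumZ.
  rewrite (Series_plus (fun n => x * f (Z.of_nat n)) (fun n => y * g (Z.of_nat n))).
  rewrite (Series_plus (fun n => x * f (- Z.of_nat (S n))%Z) (fun n => y * g (- Z.of_nat (S n))%Z)).
  rewrite !Series_scal_l. ring.
  all: apply ex_series_scalR; auto.
Qed.

Lemma sumZ_plus f g : summ f -> summ g -> sumZ (fun k => f k + g k) = sumZ f + sumZ g.
Proof. intros. rewrite <- (Rmult_1_l (sumZ f)), <- (Rmult_1_l (sumZ g)), <- sumZ_lin; auto.
  apply sumZ_ext; intros; ring. Qed.

Lemma sumZ_minus f g : summ f -> summ g -> sumZ (fun k => f k - g k) = sumZ f - sumZ g.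
Proof. intros. replace (sumZ f - sumZ g) with (1 * sumZ f + (-1) * sumZ g) by ring. rewrite <- sumZ_lin; auto.
  apply sumZ_ext; intros; ring. Qed.

Lemma sumZ_scal f x : sumZ (fun k => x * f k) = x * sumZ f.
Proof. unfold sumZ. rewrite !Series_scal_l. ring. Qed.

Lemma sumZ_le f g : summ f -> summ g -> (forall k, f k <= g k) -> sumZ f <= sumZ g.
Proof.
  intros Hf Hg H. apply summ_ex in Hf as [F1 F2]. apply summ_ex in Hg as [G1 G2].
  unfold sumZ. apply Rplus_le_compat; apply Series_le_gen; auto.
Qed.

Lemma sumZ_nonneg f : (forall k, 0 <= f k) -> 0 <= sumZ f.
Proof. intros H. unfold sumZ. apply Rplus_le_le_0_compat; apply Series_nonneg'; auto. Qed.

Lemma summ_shift_iff f : summ (fun k => f (k + 1)%Z) <-> summ f.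
Proof.
  unfold summ. split; intros [H1 H2]; split.
  - apply ex_series_incr_1. eapply ex_series_ext. 2: apply H1. intros n; cbv beta. f_equal. f_equal. lia.
  - apply ex_series_incr_1 in H2. eapply ex_series_ext. 2: apply H2. intros n; cbv beta. f_equal. f_equal. lia.
  - apply ex_series_incr_1 in H1. eapply ex_series_ext. 2: apply H1. intros n; cbv beta. f_equal. f_equal. lia.
  - apply ex_series_incr_1. eapply ex_series_ext. 2: apply H2. intros n; cbv beta. f_equal. f_equal. lia.
Qed.

Lemma sumZ_shift f : summ f -> sumZ (fun k => f (k + 1)%Z) = sumZ f.
Proof.
  intros Hf. apply summ_ex in Hf as [F1 F2]. unfold sumZ.
  rewrite (Series_incr_1 (fun n => f (Z.of_nat n))) by assumption.
  assert (E : ex_series (fun n => f (- Z.of_nat n)%Z)).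
  { apply ex_series_incr_1. eapply ex_series_ext. 2: apply F2. intros n; reflexivity. }
  rewrite (Series_ext (fun n => f (- Z.of_nat (S n) + 1)%Z) (fun n => f (- Z.of_nat n)%Z)) by (intros; f_equal; lia).
  rewrite (Series_incr_1 (fun n => f (- Z.of_nat n)%Z)) by assumption.
  rewrite (Series_ext (fun n => f (Z.of_nat n + 1)%Z) (fun k => f (Z.of_nat (S k)))) by (intros; f_equal; lia).
  simpl. ring.
Qed.

Lemma summ_shiftm f : summ f -> summ (fun k => f (k - 1)%Z).
Proof.
  intros Hf. apply summ_shift_iff. eapply summ_ext. 2: apply Hf. intros k. f_equal. lia.
Qed.

Lemma summ_shiftp f : summ f -> summ (fun k => f (k + 1)%Z).
Proof. intros; apply summ_shift_iff; auto. Qed.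

Lemma sumZ_shiftm f : summ f -> sumZ (fun k => f (k - 1)%Z) = sumZ f.
Proof.
  intros Hf. rewrite <- (sumZ_shift (fun k => f (k - 1)%Z)) by (apply summ_shiftm; auto).
  apply sumZ_ext. intros k. f_equal. lia.
Qed.

Lemma sumZ_three f : summ f -> (forall k, 0 <= f k) -> f 0%Z + f 1%Z + f (-1)%Z <= sumZ f.
Proof.
  intros Hf Hp. apply summ_ex in Hf as [F1 F2]. unfold sumZ.
  rewrite (Series_incr_1 (fun n => f (Z.of_nat n))) by assumption.
  assert (F1' : ex_series (fun k => f (Z.of_nat (S k)))) by (apply (exR_incr1 (fun n => f (Z.of_nat n))); auto).
  rewrite (Series_incr_1 (fun k => f (Z.of_nat (S k)))) by assumption.
  rewrite (Series_incr_1 (fun n => f (- Z.of_nat (S n))%Z)) by assumption.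
  simpl.
  pose proof (Series_nonneg' (fun k => f (Z.of_nat (S (S k)))) (fun n => Hp _)).
  pose proof (Series_nonneg' (fun k => f (- Z.of_nat (S (S k)))%Z) (fun n => Hp _)).
  simpl in *. lra.
Qed.

Lemma sumZ_even f : summ f -> (forall k, f (- k)%Z = f k) ->
  sumZ f = 2 * Series (fun n => f (Z.of_nat n)) - f 0%Z.
Proof.
  intros Hf He. apply summ_ex in Hf as [F1 F2]. unfold sumZ.
  rewrite (Series_ext (fun n => f (- Z.of_nat (S n))%Z) (fun n => f (Z.of_nat (S n)))) by (intros; apply He).
  rewrite (Series_incr_1 (fun n => f (Z.of_nat n))) by assumption. simpl. ring.
Qed.

Lemma half_le_sumZ f : summ f -> (forall k, 0 <= f k) -> Series (fun n => f (Z.of_nat n)) <= sumZ f.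
Proof.
  intros Hf Hp. unfold sumZ. pose proof (Series_nonneg' (fun n => f (- Z.of_nat (S n))%Z) (fun n => Hp _)). lra.
Qed.

Lemma Series_zero (a : nat -> R) : (forall n, a n = 0) -> Series a = 0.
Proof.
  intros H. rewrite (Series_ext a (fun n => 0 * 0)) by (intros; rewrite H; ring).
  rewrite Series_scal_l. ring.
Qed.

Lemma exp_series x : is_series (fun n => x ^ n / INR (fact n)) (exp x).
Proof.
  pose proof (is_exp_Reals x) as H. unfold is_pseries in H.
  eapply is_series_ext. 2: exact H. intros n. simpl. rewrite pow_n_pow. unfold scal; simpl. unfold mult; simpl. field. apply INR_fact_neq_0.
Qed.

Definition pi (t : R) (n : nat) : R := exp (- t) * t ^ n / INR (fact n).

Lemma pi_series t : is_series (pi t) 1.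
Proof.
  pose proof (is_series_scal_r (exp (- t)) _ _ (exp_series t)) as H.
  replace 1 with (exp t * exp (- t)) by (rewrite <- exp_plus, Rplus_opp_r, exp_0; reflexivity).
  eapply is_series_ext. 2: exact H. intros n.
  assert (E : t ^ n / INR (fact n) * exp (- t) = pi t n) by (unfold pi; field; apply INR_fact_neq_0).
  exact E.
Qed.

Lemma pi_ex t : ex_series (pi t).
Proof. eexists. apply pi_series. Qed.

Lemma pi_Series t : Series (pi t) = 1.
Proof. apply is_series_unique, pi_series. Qed.

Lemma pi_nonneg t n : 0 <= t -> 0 <= pi t n.
Proof.
  intros Ht. unfold pi. apply Rmult_le_pos. apply Rmult_le_pos. left; apply exp_pos. apply pow_le; auto.
  left. apply Rinv_0_lt_compat. apply lt_0_INR. apply lt_O_fact.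
Qed.

Lemma ctrw_eq t k : ctrw_pmf t k = Series (fun n => pi t n * srw_pmf n k).
Proof. reflexivity. Qed.

Lemma term_ex t k : 0 <= t -> ex_series (fun n => pi t n * srw_pmf n k).
Proof.
  intros Ht. apply (ex_series_dom _ (pi t)). 2: apply pi_ex.
  intros n. pose proof (pi_nonneg t n Ht). pose proof (srw_nonneg n k). pose proof (srw_le1 n k).
  rewrite Rabs_pos_eq by nra. nra.
Qed.

Lemma sum_f_nonneg_le (a : nat -> R) m : (forall n, 0 <= a n) -> a m <= sum_f_R0 a m.
Proof.
  intros H. destruct m. simpl. lra. simpl.
  assert (0 <= sum_f_R0 a m). { apply cond_pos_sum. auto. } lra.
Qed.

Lemma Series_ge_term (a : nat -> R) m : ex_series a -> (forall n, 0 <= a n) -> a m <= Series a.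
Proof.
  intros He H. rewrite (Series_incr_n a (S m)) by (auto; lia). simpl pred.
  pose proof (sum_f_nonneg_le a m H).
  pose proof (Series_nonneg' (fun k => a (S m + k)%nat) (fun n => H _)). lra.
Qed.

Lemma sum_n_le_Series (a : nat -> R) K : ex_series a -> (forall n, 0 <= a n) -> sum_n a K <= Series a.
Proof.
  intros He H. rewrite (Series_incr_n a (S K)) by (auto; lia). simpl pred.
  rewrite sum_n_Reals.
  pose proof (Series_nonneg' (fun k => a (S K + k)%nat) (fun n => H _)). lra.
Qed.

Lemma p_nonneg t k : 0 <= t -> 0 <= ctrw_pmf t k.
Proof.
  intros Ht. rewrite ctrw_eq. apply Series_nonneg'. intros n.
  apply Rmult_le_pos. apply pi_nonneg; auto. apply srw_nonneg.
Qed.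

Lemma p_le1 t k : 0 <= t -> ctrw_pmf t k <= 1.
Proof.
  intros Ht. rewrite ctrw_eq, <- (pi_Series t). apply Series_le. 2: apply pi_ex.
  intros n. pose proof (pi_nonneg t n Ht). pose proof (srw_nonneg n k). pose proof (srw_le1 n k). split; nra.
Qed.

Lemma p_ge_term t k n : 0 <= t -> pi t n * srw_pmf n k <= ctrw_pmf t k.
Proof.
  intros Ht. rewrite ctrw_eq. apply (Series_ge_term (fun n => pi t n * srw_pmf n k)).
  apply term_ex; auto. intros m. apply Rmult_le_pos. apply pi_nonneg; auto. apply srw_nonneg.
Qed.

Lemma p_sym t k : ctrw_pmf t (- k) = ctrw_pmf t k.
Proof. rewrite !ctrw_eq. apply Series_ext. intros n. rewrite srw_sym. reflexivity. Qed.

Lemma pi_S t n : pi t (S n) * INR (S n) = t * pi t n.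
Proof.
  unfold pi. rewrite fact_simpl, mult_INR. simpl pow.
  field. split. apply INR_fact_neq_0. apply not_0_INR. lia.
Qed.

Lemma p_stein t k : 0 <= t ->
  IZR k * ctrw_pmf t k = t / 2 * (ctrw_pmf t (k - 1) - ctrw_pmf t (k + 1)).
Proof.
  intros Ht. rewrite !ctrw_eq.
  rewrite <- Series_scal_l.
  rewrite Series_incr_1.
  2: { apply ex_series_scalR. apply term_ex; auto. }
  replace (IZR k * (pi t 0 * srw_pmf 0 k)) with 0.
  2: { rewrite srw_0. destruct Z.eq_dec. subst. simpl. ring. ring. }
  rewrite Rplus_0_l.
  rewrite <- Series_minus by (apply term_ex; auto).
  rewrite <- Series_scal_l.
  apply Series_ext. intros n.
  replace (IZR k * (pi t (S n) * srw_pmf (S n) k)) with (pi t (S n) * (IZR k * srw_pmf (S n) k)) by ring.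
  rewrite srw_stein.
  replace (pi t (S n) * (INR (S n) / 2 * (srw_pmf n (k - 1) - srw_pmf n (k + 1))))
    with ((pi t (S n) * INR (S n)) / 2 * (srw_pmf n (k - 1) - srw_pmf n (k + 1))) by field.
  rewrite pi_S. field.
Qed.

Lemma p_lower t k : 0 <= t ->
  exp (- t) * (t / 2) ^ (Z.abs_nat k) / INR (fact (Z.abs_nat k)) <= ctrw_pmf t k.
Proof.
  intros Ht.
  assert (Hs : srw_pmf (Z.abs_nat k) k = / 2 ^ (Z.abs_nat k)).
  { destruct (Z_le_gt_dec 0 k).
    - rewrite <- (srw_top (Z.abs_nat k)). f_equal. lia.
    - rewrite <- srw_sym. rewrite <- (srw_top (Z.abs_nat k)). f_equal. lia. }
  eapply Rle_trans. 2: apply (p_ge_term t k (Z.abs_nat k) Ht).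
  rewrite Hs. unfold pi. right. unfold Rdiv. rewrite Rpow_mult_distr, pow_inv. field.
  split. apply pow_nonzero; lra. apply INR_fact_neq_0.
Qed.

Lemma p_upper_nat t n : 0 <= t -> ctrw_pmf t (Z.of_nat n) <= (t / 2) ^ n / INR (fact n).
Proof.
  intros Ht. induction n.
  - simpl. pose proof (p_le1 t 0 Ht). lra.
  - pose proof (p_stein t (Z.of_nat (S n)) Ht) as H.
    replace (Z.of_nat (S n) - 1)%Z with (Z.of_nat n) in H by lia.
    pose proof (p_nonneg t (Z.of_nat (S n) + 1) Ht).
    rewrite <- INR_IZR_INZ in H.
    assert (Hp : INR (S n) * ctrw_pmf t (Z.of_nat (S n)) <= t / 2 * ((t / 2) ^ n / INR (fact n))).
    { rewrite H. apply Rmult_le_compat_l. lra. lra. }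
    rewrite fact_simpl, mult_INR. simpl pow.
    assert (0 < INR (S n)) by (apply lt_0_INR; lia).
    assert (0 < INR (fact n)) by (apply lt_0_INR, lt_O_fact).
    apply (Rmult_le_reg_l (INR (S n))); auto.
    replace (INR (S n) * (t / 2 * (t / 2) ^ n / (INR (S n) * INR (fact n))))
      with (t / 2 * ((t / 2) ^ n / INR (fact n))) by (field; lra). exact Hp.
Qed.

Lemma p_upper t k : 0 <= t -> ctrw_pmf t k <= (t / 2) ^ (Z.abs_nat k) / INR (fact (Z.abs_nat k)).
Proof.
  intros Ht. destruct (Z_le_gt_dec 0 k).
  - rewrite <- (p_upper_nat t _ Ht). right. f_equal. lia.
  - rewrite <- p_sym. rewrite <- (p_upper_nat t _ Ht). right. f_equal. lia.
Qed.

Lemma geom_summ : summ (fun k => (/ 2) ^ (Z.abs_nat k)).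
Proof.
  split.
  - eapply ex_series_ext. 2: apply (ex_series_geom (/2)); rewrite Rabs_pos_eq; lra.
    intros n. simpl. rewrite Zabs2Nat.id. rewrite Rabs_pos_eq. reflexivity. apply pow_le; lra.
  - apply (ex_series_ext (fun n => / 2 * (/ 2) ^ n)).
    intros n. rewrite Rabs_pos_eq. replace (Z.abs_nat (- Z.of_nat (S n))) with (S n) by lia. reflexivity.
    apply pow_le; lra.
    apply ex_series_scalR. apply ex_series_geom. rewrite Rabs_pos_eq; lra.
Qed.

Lemma srw_summ n : summ (srw_pmf n).
Proof.
  apply (summ_dom _ (fun k => 2 ^ n * (/ 2) ^ (Z.abs_nat k))).
  2: apply summ_scal, geom_summ.
  intros k. rewrite Rabs_pos_eq by apply srw_nonneg.
  destruct (Z_lt_le_dec (Z.of_nat n) (Z.abs k)).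
  - rewrite srw_supp by auto. apply Rmult_le_pos; apply pow_le; lra.
  - eapply Rle_trans. apply srw_le1.
    replace (2 ^ n * (/ 2) ^ Z.abs_nat k) with (2 ^ (n - Z.abs_nat k)).
    apply pow_R1_Rle; lra.
    replace n with ((n - Z.abs_nat k) + Z.abs_nat k)%nat at 2 by lia.
    rewrite pow_add. rewrite Rmult_assoc, <- Rpow_mult_distr. rewrite Rinv_r by lra. rewrite pow1. ring.
Qed.

Lemma srw_sum n : sumZ (srw_pmf n) = 1.
Proof.
  induction n.
  - unfold sumZ. rewrite (Series_zero (fun n => srw_pmf 0 (- Z.of_nat (S n))%Z)).
    2: { intros m. rewrite srw_0. destruct Z.eq_dec; [lia|reflexivity]. }
    rewrite Series_incr_1. 2: { apply summ_ex, srw_summ. }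
    rewrite (Series_zero (fun k => srw_pmf 0 (Z.of_nat (S k)))).
    2: { intros m. rewrite srw_0. destruct Z.eq_dec; [lia|reflexivity]. }
    rewrite srw_0. destruct Z.eq_dec; [|simpl in *; lia]. ring.
  - rewrite (sumZ_ext _ (fun k => / 2 * srw_pmf n (k - 1)%Z + / 2 * srw_pmf n (k + 1)%Z)).
    2: { intros k. rewrite srw_S. field. }
    rewrite sumZ_lin. rewrite sumZ_shiftm, sumZ_shift, IHn. field.
    all: try apply srw_summ.
    apply summ_shiftm, srw_summ. apply summ_shiftp, srw_summ.
Qed.

Lemma exR_decr1 (a : nat -> R) : ex_series (fun k => a (S k)) -> ex_series a.
Proof. intros H. apply ex_series_incr_1. exact H. Qed.

Lemma ex_poly_exp r x : 0 <= x -> ex_series (fun n => INR (S n) ^ r * x ^ n / INR (fact n)).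
Proof.
  intros Hx. induction r.
  - eapply ex_series_ext. 2: (eexists; apply (exp_series x)). intros n. simpl. unfold Rdiv. rewrite Rmult_1_l. reflexivity.
  - assert (Hb : ex_series (fun n => INR n * (INR (S n) ^ r * x ^ n / INR (fact n)))).
    { apply exR_decr1.
      apply (ex_series_dom _ (fun m => x * 2 ^ r * (INR (S m) ^ r * x ^ m / INR (fact m)))).
      2: { apply ex_series_scalR. exact IHr. }
      intros m.
      assert (0 < INR (fact m)) by (apply lt_0_INR, lt_O_fact).
      assert (0 < INR (S m)) by (apply lt_0_INR; lia).
      assert (E : INR (S m) * (INR (S (S m)) ^ r * x ^ S m / INR (fact (S m)))
                = x * (INR (S (S m)) ^ r * x ^ m / INR (fact m))).
      { rewrite fact_simpl, mult_INR. simpl pow. field. lra. }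
      rewrite E.
      assert (H2 : INR (S (S m)) ^ r <= 2 ^ r * INR (S m) ^ r).
      { rewrite <- Rpow_mult_distr. apply pow_incr. rewrite !S_INR. pose proof (pos_INR m). lra. }
      assert (0 <= x ^ m / INR (fact m)) by (apply Rmult_le_pos; [apply pow_le; auto | left; apply Rinv_0_lt_compat; auto]).
      assert (0 <= INR (S (S m)) ^ r) by (apply pow_le, pos_INR).
      assert (E2 : x * (INR (S (S m)) ^ r * x ^ m / INR (fact m)) = x * (INR (S (S m)) ^ r * (x ^ m / INR (fact m)))) by (unfold Rdiv; ring).
      rewrite E2.
      rewrite Rabs_pos_eq.
      + replace (x * 2 ^ r * (INR (S m) ^ r * x ^ m / INR (fact m))) with (x * ((2 ^ r * INR (S m) ^ r) * (x ^ m / INR (fact m)))) by (unfold Rdiv; ring).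
        apply Rmult_le_compat_l; auto. apply Rmult_le_compat_r; auto.
      + apply Rmult_le_pos; auto. apply Rmult_le_pos; auto. }
    eapply ex_series_ext. 2: apply (ex_series_lin _ _ 1 1 IHr Hb).
    intros n. cbv beta. assert (E3 : 1 * (INR (S n) ^ r * x ^ n / INR (fact n)) + 1 * (INR n * (INR (S n) ^ r * x ^ n / INR (fact n))) = INR (S n) ^ S r * x ^ n / INR (fact n)) by (rewrite <- tech_pow_Rmult, S_INR; unfold Rdiv; ring). exact E3.
Qed.

Definition Nk (k : Z) : R := INR (S (Z.abs_nat k)).

Lemma Nk_ge1 k : 1 <= Nk k.
Proof. unfold Nk. rewrite S_INR. pose proof (pos_INR (Z.abs_nat k)). lra. Qed.

Lemma summ_base r x : 0 <= x -> summ (fun k => Nk k ^ r * x ^ (Z.abs_nat k) / INR (fact (Z.abs_nat k))).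
Proof.
  intros Hx. pose proof (ex_poly_exp r x Hx) as H.
  assert (Hnn : forall n, 0 <= INR (S n) ^ r * x ^ n / INR (fact n)).
  { intros n. apply Rmult_le_pos. apply Rmult_le_pos; apply pow_le; auto. apply pos_INR.
    left; apply Rinv_0_lt_compat, lt_0_INR, lt_O_fact. }
  split; unfold Nk.
  - eapply ex_series_ext. 2: exact H. intros n. rewrite Zabs2Nat.id. rewrite Rabs_pos_eq; auto.
  - apply exR_incr1 in H. eapply ex_series_ext. 2: exact H. intros n.
    replace (Z.abs_nat (- Z.of_nat (S n))) with (S n) by lia. rewrite Rabs_pos_eq; auto.
Qed.

Lemma p_summ t : 0 <= t -> summ (ctrw_pmf t).
Proof.
  intros Ht. apply (summ_dom _ (fun k => Nk k ^ 0 * (t / 2) ^ (Z.abs_nat k) / INR (fact (Z.abs_nat k)))).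
  2: apply summ_base; lra.
  intros k. rewrite Rabs_pos_eq by (apply p_nonneg; auto). simpl pow. rewrite Rmult_1_l. apply p_upper; auto.
Qed.

Definition PF (u : Z -> R) : Prop := exists C r, forall k, Rabs (u k) <= C * Nk k ^ r.
Definition PB (t : R) (f : Z -> R) : Prop := exists C r, forall k, Rabs (f k) <= C * Nk k ^ r * ctrw_pmf t k.

Lemma Nk_pow_pos k r : 0 < Nk k ^ r.
Proof. apply pow_lt. pose proof (Nk_ge1 k). lra. Qed.

Lemma PF_Cnonneg u C r : (forall k, Rabs (u k) <= C * Nk k ^ r) -> 0 <= C.
Proof.
  intros H. specialize (H 0%Z). pose proof (Rabs_pos (u 0%Z)). pose proof (Nk_pow_pos 0 r).
  destruct (Rle_dec 0 C); auto. nra.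
Qed.

Lemma PB_summ t f : 0 <= t -> PB t f -> summ f.
Proof.
  intros Ht [C [r H]].
  apply (summ_dom _ (fun k => Rabs C * (Nk k ^ r * (t / 2) ^ (Z.abs_nat k) / INR (fact (Z.abs_nat k))))).
  2: apply summ_scal, summ_base; lra.
  intros k. eapply Rle_trans. apply H.
  pose proof (p_upper t k Ht). pose proof (p_nonneg t k Ht). pose proof (Nk_pow_pos k r).
  pose proof (Rle_abs C). pose proof (Rabs_pos C).
  unfold Rdiv. rewrite <- Rmult_assoc, (Rmult_assoc (Rabs C)).
  apply Rle_trans with (Rabs C * Nk k ^ r * ctrw_pmf t k).
  apply Rmult_le_compat_r; auto. apply Rmult_le_compat_r; [lra|auto].
  rewrite Rmult_assoc. apply Rmult_le_compat_l. nra. rewrite Rmult_assoc. apply Rmult_le_compat_l. lra. unfold Rdiv in H0. exact H0.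
Qed.

Lemma PF_const c : PF (fun _ => c).
Proof. exists (Rabs c), 0%nat. intros k. simpl. lra. Qed.

Lemma PF_IZR : PF (fun k => IZR k).
Proof.
  exists 1, 1%nat. intros k. unfold Nk. rewrite <- abs_IZR. rewrite pow_1.
  rewrite S_INR. rewrite INR_IZR_INZ. rewrite Zabs2Nat.id_abs. lra.
Qed.

Lemma PF_mult u v : PF u -> PF v -> PF (fun k => u k * v k).
Proof.
  intros [C1 [r1 H1]] [C2 [r2 H2]]. exists (C1 * C2), (r1 + r2)%nat. intros k.
  rewrite Rabs_mult, pow_add. specialize (H1 k). specialize (H2 k).
  pose proof (Rabs_pos (u k)). pose proof (Rabs_pos (v k)).
  replace (C1 * C2 * (Nk k ^ r1 * Nk k ^ r2)) with ((C1 * Nk k ^ r1) * (C2 * Nk k ^ r2)) by ring.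
  apply Rmult_le_compat; auto.
Qed.

Lemma PF_lin u v a b : PF u -> PF v -> PF (fun k => a * u k + b * v k).
Proof.
  intros [C1 [r1 H1]] [C2 [r2 H2]].
  pose proof (PF_Cnonneg _ _ _ H1). pose proof (PF_Cnonneg _ _ _ H2).
  exists (Rabs a * C1 + Rabs b * C2), (r1 + r2)%nat. intros k.
  specialize (H1 k). specialize (H2 k).
  assert (E1 : Nk k ^ r1 <= Nk k ^ (r1 + r2)) by (apply Rle_pow; [apply Nk_ge1|lia]).
  assert (E2 : Nk k ^ r2 <= Nk k ^ (r1 + r2)) by (apply Rle_pow; [apply Nk_ge1|lia]).
  eapply Rle_trans. apply Rabs_triang. rewrite !Rabs_mult.
  pose proof (Rabs_pos a). pose proof (Rabs_pos b).
  assert (Rabs a * Rabs (u k) <= Rabs a * (C1 * Nk k ^ (r1 + r2))).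
  { apply Rmult_le_compat_l; auto. eapply Rle_trans. apply H1. apply Rmult_le_compat_l; auto. }
  assert (Rabs b * Rabs (v k) <= Rabs b * (C2 * Nk k ^ (r1 + r2))).
  { apply Rmult_le_compat_l; auto. eapply Rle_trans. apply H2. apply Rmult_le_compat_l; auto. }
  nra.
Qed.

Lemma PF_ext u v : (forall k, u k = v k) -> PF v -> PF u.
Proof. intros E [C [r H]]. exists C, r. intros k. rewrite E. auto. Qed.

Lemma PF_plus u v : PF u -> PF v -> PF (fun k => u k + v k).
Proof. intros. apply (PF_ext _ (fun k => 1 * u k + 1 * v k)). intros; ring. apply PF_lin; auto. Qed.

Lemma PF_minus u v : PF u -> PF v -> PF (fun k => u k - v k).
Proof. intros. apply (PF_ext _ (fun k => 1 * u k + (-1) * v k)). intros; ring. apply PF_lin; auto. Qed.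

Lemma PF_pow2 u : PF u -> PF (fun k => u k ^ 2).
Proof. intros. apply (PF_ext _ (fun k => u k * u k)). intros; ring. apply PF_mult; auto. Qed.

Lemma Nk_shift k d : (Z.abs d <= 1)%Z -> Nk (k + d) <= 2 * Nk k.
Proof.
  intros Hd. unfold Nk. rewrite !S_INR.
  assert (INR (Z.abs_nat (k + d)) <= INR (Z.abs_nat k) + 1).
  { rewrite <- S_INR. apply le_INR. lia. }
  pose proof (pos_INR (Z.abs_nat k)). lra.
Qed.

Lemma PF_shift u d : (Z.abs d <= 1)%Z -> PF u -> PF (fun k => u (k + d)%Z).
Proof.
  intros Hd [C [r H]]. pose proof (PF_Cnonneg _ _ _ H).
  exists (C * 2 ^ r), r. intros k. eapply Rle_trans. apply H.
  rewrite Rmult_assoc. apply Rmult_le_compat_l; auto. rewrite <- Rpow_mult_distr.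
  apply pow_incr. split. pose proof (Nk_ge1 (k + d)). lra. apply Nk_shift; auto.
Qed.

Lemma PB_P t : 0 <= t -> PB t (ctrw_pmf t).
Proof.
  intros Ht. exists 1, 0%nat. intros k. simpl. rewrite Rabs_pos_eq by (apply p_nonneg; auto). lra.
Qed.

Lemma PB_mul t u f : 0 <= t -> PF u -> PB t f -> PB t (fun k => u k * f k).
Proof.
  intros Ht [C1 [r1 H1]] [C2 [r2 H2]]. exists (C1 * C2), (r1 + r2)%nat. intros k.
  rewrite Rabs_mult, pow_add. specialize (H1 k). specialize (H2 k).
  pose proof (Rabs_pos (u k)). pose proof (Rabs_pos (f k)).
  replace (C1 * C2 * (Nk k ^ r1 * Nk k ^ r2) * ctrw_pmf t k) with ((C1 * Nk k ^ r1) * (C2 * Nk k ^ r2 * ctrw_pmf t k)) by ring.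
  apply Rmult_le_compat; auto.
Qed.

Lemma PB_ext t f g : (forall k, f k = g k) -> PB t g -> PB t f.
Proof. intros E [C [r H]]. exists C, r. intros k. rewrite E. auto. Qed.

Lemma PB_uP t u : 0 <= t -> PF u -> PB t (fun k => u k * ctrw_pmf t k).
Proof. intros. apply PB_mul; auto. apply PB_P; auto. Qed.

Lemma summ_uP t u : 0 <= t -> PF u -> summ (fun k => u k * ctrw_pmf t k).
Proof. intros. apply (PB_summ t); auto. apply PB_uP; auto. Qed.

Lemma p_pos t k : 0 < t -> 0 < ctrw_pmf t k.
Proof.
  intros Ht. eapply Rlt_le_trans. 2: apply p_lower; lra.
  apply Rmult_lt_0_compat. apply Rmult_lt_0_compat. apply exp_pos. apply pow_lt; lra.
  apply Rinv_0_lt_compat, lt_0_INR, lt_O_fact.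
Qed.

Lemma exp_mono_le x y : x <= y -> exp x <= exp y.
Proof. intros [H|H]. left; apply exp_increasing; auto. subst; lra. Qed.

Lemma fact_le_exp n : INR (fact n) <= exp (INR n * INR n).
Proof.
  induction n.
  - simpl. rewrite Rmult_0_l, exp_0. lra.
  - rewrite fact_simpl, mult_INR.
    pose proof (exp_ineq1_le (INR n)). pose proof (pos_INR n).
    apply Rle_trans with (exp (INR n) * exp (INR n * INR n)).
    + apply Rmult_le_compat; try lra; try apply pos_INR; rewrite S_INR; lra.
    + rewrite <- exp_plus. apply exp_mono_le. rewrite S_INR. nra.
Qed.

Lemma G_bound t k : 0 < t ->
  Rabs (ln (ctrw_pmf t k)) <= (t + Rabs (ln (t / 2)) + 1) * Nk k ^ 2.
Proof.
  intros Ht. set (n := Z.abs_nat k).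
  pose proof (p_lower t k (Rlt_le _ _ Ht)) as Hl. fold n in Hl.
  pose proof (p_le1 t k (Rlt_le _ _ Ht)).
  pose proof (p_pos t k Ht).
  assert (Hf : 0 < INR (fact n)) by (apply lt_0_INR, lt_O_fact).
  assert (Hpow : 0 < (t / 2) ^ n) by (apply pow_lt; lra).
  assert (Hlo : 0 < exp (- t) * (t / 2) ^ n / INR (fact n)).
  { apply Rmult_lt_0_compat. apply Rmult_lt_0_compat; auto. apply exp_pos. apply Rinv_0_lt_compat; auto. }
  assert (Hln1 : ln (ctrw_pmf t k) <= 0).
  { rewrite <- ln_1. apply ln_le; auto. }
  assert (Hln2 : ln (exp (- t) * (t / 2) ^ n / INR (fact n)) <= ln (ctrw_pmf t k)) by (apply ln_le; auto).
  unfold Rdiv at 1 in Hln2. rewrite ln_mult, ln_mult, ln_exp, ln_pow, ln_Rinv in Hln2; auto;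
    try apply exp_pos; try apply Rinv_0_lt_compat; auto; try lra.
  2: { apply Rmult_lt_0_compat; auto. apply exp_pos. }
  assert (Hfact : ln (INR (fact n)) <= INR n * INR n).
  { rewrite <- (ln_exp (INR n * INR n)). apply ln_le; auto. apply fact_le_exp. }
  rewrite Rabs_left1 by auto.
  assert (HN : Nk k = INR n + 1) by (unfold Nk; rewrite S_INR; reflexivity).
  rewrite HN. pose proof (pos_INR n). pose proof (Rabs_pos (ln (t / 2))).
  pose proof (Rle_abs (- ln (t / 2))). rewrite Rabs_Ropp in H3.
  assert (INR n * (- ln (t / 2)) <= INR n * Rabs (ln (t / 2))) by (apply Rmult_le_compat_l; auto).
  simpl pow. nra.
Qed.

Lemma PF_G t : 0 < t -> PF (fun k => ln (ctrw_pmf t k)).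
Proof. intros Ht. exists (t + Rabs (ln (t / 2)) + 1), 2%nat. intros k. apply G_bound; auto. Qed.

Lemma sum_n_Series (c : nat -> nat -> R) K : (forall i, ex_series (fun n => c n i)) ->
  ex_series (fun n => sum_n (c n) K) /\
  sum_n (fun i => Series (fun n => c n i)) K = Series (fun n => sum_n (c n) K).
Proof.
  intros H. induction K.
  - rewrite sum_O. split.
    + eapply ex_series_ext. 2: apply (H 0%nat). intros n. rewrite sum_O. reflexivity.
    + apply Series_ext. intros n. rewrite sum_O. reflexivity.
  - destruct IHK as [E1 E2]. split.
    + eapply ex_series_ext. 2: apply (ex_series_lin _ _ 1 1 E1 (H (S K))).
      intros n. rewrite sum_Sn. simpl. unfold plus; simpl. ring.
    + rewrite sum_Sn. simpl. unfold plus; simpl. rewrite E2.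
      rewrite <- Series_plus; auto. apply Series_ext. intros n. rewrite sum_Sn. reflexivity.
Qed.

Lemma sum_n_nonneg (a : nat -> R) K : (forall n, 0 <= a n) -> 0 <= sum_n a K.
Proof.
  intros H. induction K. rewrite sum_O; auto. rewrite sum_Sn. simpl. unfold plus; simpl.
  specialize (H (S K)). lra.
Qed.

Definition Gpart n K := sum_n (fun i => srw_pmf n (Z.of_nat i)) K + sum_n (fun i => srw_pmf n (- Z.of_nat (S i))%Z) K.

Lemma Gpart_le1 n K : Gpart n K <= 1.
Proof.
  unfold Gpart. rewrite <- (srw_sum n). unfold sumZ.
  destruct (summ_ex _ (srw_summ n)) as [E1 E2].
  apply Rplus_le_compat; apply sum_n_le_Series; auto; intros; apply srw_nonneg.
Qed.

Lemma Gpart_eq1 n K : (n <= K)%nat -> Gpart n K = 1.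
Proof.
  intros HnK. unfold Gpart. rewrite <- (srw_sum n). unfold sumZ.
  destruct (summ_ex _ (srw_summ n)) as [E1 E2].
  rewrite (Series_incr_n _ (S K)) by (auto; lia).
  rewrite (Series_incr_n (fun n0 => srw_pmf n (- Z.of_nat (S n0))%Z) (S K)) by (auto; lia).
  rewrite (Series_zero (fun k => srw_pmf n (Z.of_nat (S K + k)))).
  2: { intros k. apply srw_supp. lia. }
  rewrite (Series_zero (fun k => srw_pmf n (- Z.of_nat (S (S K + k)))%Z)).
  2: { intros k. apply srw_supp. lia. }
  simpl pred. rewrite !sum_n_Reals. ring.
Qed.

Lemma p_total t : 0 <= t -> sumZ (ctrw_pmf t) = 1.
Proof.
  intros Ht.
  set (F := fun K => sum_n (fun i => ctrw_pmf t (Z.of_nat i)) K + sum_n (fun i => ctrw_pmf t (- Z.of_nat (S i))%Z) K).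
  destruct (summ_ex _ (p_summ t Ht)) as [E1 E2].
  assert (HF : is_lim_seq F (sumZ (ctrw_pmf t))).
  { unfold F, sumZ. apply is_lim_seq_plus'.
    apply Series_correct in E1. exact E1. apply Series_correct in E2. exact E2. }
  assert (HFe : forall K, F K = Series (fun n => pi t n * Gpart n K)).
  { intros K. unfold F.
    destruct (sum_n_Series (fun n i => pi t n * srw_pmf n (Z.of_nat i)) K) as [A1 A2].
    { intros i. apply term_ex; auto. }
    destruct (sum_n_Series (fun n i => pi t n * srw_pmf n (- Z.of_nat (S i))%Z) K) as [B1 B2].
    { intros i. apply term_ex; auto. }
    rewrite (sum_n_ext _ (fun i => Series (fun n => pi t n * srw_pmf n (Z.of_nat i)))) by (intros; reflexivity).
    rewrite (sum_n_ext (fun i => ctrw_pmf t (- Z.of_nat (S i))%Z) (fun i => Series (fun n => pi t n * srw_pmf n (- Z.of_nat (S i))%Z))) by (intros; reflexivity).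
    rewrite A2, B2. rewrite <- Series_plus; auto. apply Series_ext. intros n.
    unfold Gpart. rewrite Rmult_plus_distr_l.
    rewrite <- !(sum_n_mult_l (K := R_Ring)). reflexivity. }
  assert (Hup : forall K, F K <= 1).
  { intros K. rewrite HFe, <- (pi_Series t). apply Series_le. 2: apply pi_ex.
    intros n. pose proof (pi_nonneg t n Ht). pose proof (Gpart_le1 n K).
    assert (0 <= Gpart n K) by (unfold Gpart; apply Rplus_le_le_0_compat; apply sum_n_nonneg; intros; apply srw_nonneg).
    split; nra. }
  assert (Hlo : forall K, sum_n (pi t) K <= F K).
  { intros K. rewrite HFe.
    rewrite (sum_n_ext_loc (pi t) (fun n => pi t n * Gpart n K)).
    2: { intros n Hn. rewrite Gpart_eq1 by auto. symmetry. apply Rmult_1_r. }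
    apply sum_n_le_Series.
    - apply (ex_series_dom _ (pi t)). 2: apply pi_ex.
      intros n. pose proof (pi_nonneg t n Ht). pose proof (Gpart_le1 n K).
      assert (0 <= Gpart n K) by (unfold Gpart; apply Rplus_le_le_0_compat; apply sum_n_nonneg; intros; apply srw_nonneg).
      rewrite Rabs_pos_eq; nra.
    - intros n. pose proof (pi_nonneg t n Ht).
      assert (0 <= Gpart n K) by (unfold Gpart; apply Rplus_le_le_0_compat; apply sum_n_nonneg; intros; apply srw_nonneg).
      nra. }
  assert (H1 : Rbar_le 1 (sumZ (ctrw_pmf t))).
  { apply (is_lim_seq_le (sum_n (pi t)) F). exact Hlo. apply (pi_series t). exact HF. }
  assert (H2 : Rbar_le (sumZ (ctrw_pmf t)) 1).
  { apply (is_lim_seq_le F (fun _ => 1)). exact Hup. exact HF. apply is_lim_seq_const. }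
  simpl in H1, H2. lra.
Qed.


Notation P t := (ctrw_pmf t).

Lemma PF_shp u : PF u -> PF (fun k => u (k + 1)%Z).
Proof. intros. apply PF_shift; auto; lia. Qed.

Lemma PF_shm u : PF u -> PF (fun k => u (k - 1)%Z).
Proof. intros H. apply (PF_ext _ (fun k => u (k + (-1))%Z)). intros; f_equal; lia. apply PF_shift; auto; lia. Qed.

Lemma stein_sum t v : 0 <= t -> PF v ->
  sumZ (fun k => v k * IZR k * P t k) = t / 2 * sumZ (fun j => (v (j + 1)%Z - v (j - 1)%Z) * P t j).
Proof.
  intros Ht Hv.
  assert (S1 : summ (fun j => v (j + 1)%Z * P t j)) by (apply summ_uP; auto; apply PF_shp; auto).
  assert (S2 : summ (fun j => v (j - 1)%Z * P t j)) by (apply summ_uP; auto; apply PF_shm; auto).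
  rewrite (sumZ_ext _ (fun k => (t / 2) * ((fun j => v (j + 1)%Z * P t j) (k - 1)%Z)
                               + (- (t / 2)) * ((fun j => v (j - 1)%Z * P t j) (k + 1)%Z))).
  2: { intros k. cbv beta. replace (k - 1 + 1)%Z with k by ring. replace (k + 1 - 1)%Z with k by ring.
       rewrite Rmult_assoc, p_stein by auto. ring. }
  rewrite sumZ_lin. 2: exact (summ_shiftm _ S1). 2: exact (summ_shiftp _ S2).
  rewrite (sumZ_shiftm (fun j => v (j + 1)%Z * P t j)) by auto.
  rewrite (sumZ_shift (fun j => v (j - 1)%Z * P t j)) by auto.
  rewrite (sumZ_ext (fun j => (v (j + 1)%Z - v (j - 1)%Z) * P t j) (fun j => 1 * (v (j + 1)%Z * P t j) + (-1) * (v (j - 1)%Z * P t j))) by (intros; ring).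
  rewrite sumZ_lin by auto. ring.
Qed.

Lemma S0 t : 0 <= t -> sumZ (P t) = 1.
Proof. apply p_total. Qed.

Lemma S2 t : 0 <= t -> sumZ (fun k => IZR k ^ 2 * P t k) = t.
Proof.
  intros Ht. rewrite (sumZ_ext _ (fun k => IZR k * IZR k * P t k)) by (intros; ring).
  rewrite stein_sum by (auto; apply PF_IZR).
  rewrite (sumZ_ext _ (fun j => 2 * P t j)).
  2: { intros j. rewrite plus_IZR, minus_IZR. ring. }
  rewrite sumZ_scal, S0 by auto. field.
Qed.

Lemma S4 t : 0 <= t -> sumZ (fun k => IZR k ^ 4 * P t k) = 3 * t ^ 2 + t.
Proof.
  intros Ht. rewrite (sumZ_ext _ (fun k => IZR k ^ 3 * IZR k * P t k)) by (intros; ring).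
  rewrite stein_sum.
  2: auto.
  2: { apply (PF_ext _ (fun k => IZR k * (IZR k * IZR k))). intros; ring.
       apply PF_mult. apply PF_IZR. apply PF_mult; apply PF_IZR. }
  rewrite (sumZ_ext _ (fun j => 6 * (IZR j ^ 2 * P t j) + 2 * P t j)).
  2: { intros j. rewrite plus_IZR, minus_IZR. ring. }
  rewrite sumZ_lin. rewrite S2, S0 by auto. field.
  apply summ_uP; auto. apply PF_pow2, PF_IZR. apply p_summ; auto.
Qed.

Lemma key_ln a b : 0 < a -> 0 < b -> a - b <= a * (ln a - ln b).
Proof.
  intros Ha Hb. pose proof (exp_ineq1_le (ln (b / a))) as H.
  rewrite exp_ln in H by (apply Rdiv_lt_0_compat; auto).
  unfold Rdiv in H. rewrite ln_mult, ln_Rinv in H by (auto; apply Rinv_0_lt_compat; auto).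
  apply (Rmult_le_compat_l a) in H; [|lra].
  replace (a * (b * / a)) with b in H by (field; lra). nra.
Qed.

Lemma core_ineq a q r t : 0 <= a -> 0 < q -> 0 < r -> 0 < t -> q - r = 2 / t * a ->
  - (a / q) * (q * (ln q - ln r)) <= - (2 / t * a ^ 2 / q).
Proof.
  intros Ha Hq Hr Ht E. pose proof (key_ln q r Hq Hr) as K. rewrite E in K.
  assert (0 <= a / q) by (apply Rmult_le_pos; auto; left; apply Rinv_0_lt_compat; auto).
  apply (Rmult_le_compat_l (a / q)) in K; auto.
  replace (a / q * (2 / t * a)) with (2 / t * a ^ 2 / q) in K by (field; lra). lra.
Qed.

Definition G t k := ln (P t k).

Definition h t j := if Z_le_gt_dec 0 j then 2 / t * (IZR j * P t j) ^ 2 / P t (j - 1)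
                    else 2 / t * (- IZR j * P t j) ^ 2 / P t (j + 1).

Lemma A_le_h t j : 0 < t ->
  IZR j * (G t (j + 1) - G t (j - 1)) * P t j <= - h t j.
Proof.
  intros Ht. pose proof (p_stein t j (Rlt_le _ _ Ht)) as St.
  pose proof (p_pos t j Ht). pose proof (p_pos t (j - 1) Ht). pose proof (p_pos t (j + 1) Ht).
  unfold h, G. destruct (Z_le_gt_dec 0 j).
  - assert (Hj : 0 <= IZR j) by (apply IZR_le; lia).
    eapply Rle_trans. 2: apply (core_ineq (IZR j * P t j) (P t (j - 1)) (P t (j + 1)) t); auto.
    + right. field. lra.
    + apply Rmult_le_pos; lra.
    + rewrite St. field. lra.
  - assert (Hj : IZR j < 0) by (apply IZR_lt; lia).
    eapply Rle_trans. 2: apply (core_ineq (- IZR j * P t j) (P t (j + 1)) (P t (j - 1)) t); auto.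
    + right. field. lra.
    + apply Rmult_le_pos; lra.
    + replace (- IZR j * P t j) with (- (IZR j * P t j)) by ring. rewrite St. field. lra.
Qed.

Lemma h_bounds t j : 0 < t -> 0 <= h t j <= Nk j * P t j.
Proof.
  intros Ht. pose proof (p_stein t j (Rlt_le _ _ Ht)) as St.
  pose proof (p_pos t j Ht). pose proof (p_pos t (j - 1) Ht). pose proof (p_pos t (j + 1) Ht).
  assert (HN : Rabs (IZR j) <= Nk j).
  { destruct PF_IZR as [C [r Hb]]. unfold Nk. rewrite <- abs_IZR, S_INR, INR_IZR_INZ, Zabs2Nat.id_abs. lra. }
  assert (gen : forall a q, 0 <= a -> 0 < q -> a <= t / 2 * q -> 0 <= 2 / t * a ^ 2 / q <= a).
  { intros a q Ha Hq Haq. split.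
    - apply Rmult_le_pos. apply Rmult_le_pos. left; apply Rdiv_lt_0_compat; lra. apply pow2_ge_0.
      left; apply Rinv_0_lt_compat; auto.
    - apply (Rmult_le_reg_r q); auto. replace (2 / t * a ^ 2 / q * q) with (2 / t * (a * a)) by (field; lra).
      apply (Rmult_le_reg_l (t / 2)). lra. replace (t / 2 * (2 / t * (a * a))) with (a * a) by (field; lra).
      assert (a * a <= a * (t / 2 * q)) by (apply Rmult_le_compat_l; auto). nra. }
  unfold h. destruct (Z_le_gt_dec 0 j).
  - assert (Hj : 0 <= IZR j) by (apply IZR_le; lia).
    assert (0 <= IZR j * P t j) by (apply Rmult_le_pos; lra).
    destruct (gen (IZR j * P t j) (P t (j - 1))); auto. assert (0 <= t / 2 * P t (j + 1)) by (apply Rmult_le_pos; lra). rewrite St. nra.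
    split; auto. eapply Rle_trans. apply H4. apply Rmult_le_compat_r. lra. rewrite Rabs_pos_eq in HN; auto.
  - assert (Hj : IZR j < 0) by (apply IZR_lt; lia).
    assert (0 <= - IZR j * P t j) by (apply Rmult_le_pos; lra).
    destruct (gen (- IZR j * P t j) (P t (j + 1))); auto. assert (0 <= t / 2 * P t (j - 1)) by (apply Rmult_le_pos; lra). replace (- IZR j * P t j) with (- (IZR j * P t j)) by ring. rewrite St. nra.
    split; auto. eapply Rle_trans. apply H4. apply Rmult_le_compat_r. lra. rewrite Rabs_left in HN; auto.
Qed.

Lemma PF_Nk : PF Nk.
Proof. exists 1, 1%nat. intros k. rewrite pow_1, Rabs_pos_eq. lra. pose proof (Nk_ge1 k). lra. Qed.

Lemma h_summ t : 0 < t -> summ (h t).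
Proof.
  intros Ht. apply (summ_dom _ (fun k => Nk k * P t k)).
  - intros k. destruct (h_bounds t k Ht). rewrite Rabs_pos_eq; auto.
  - apply summ_uP. lra. apply PF_Nk.
Qed.

Lemma h_even t k : h t (- k)%Z = h t k.
Proof.
  unfold h. destruct (Z_le_gt_dec 0 (- k)); destruct (Z_le_gt_dec 0 k).
  - assert (k = 0%Z) by lia. subst. reflexivity.
  - replace (- k - 1)%Z with (- (k + 1))%Z by ring. rewrite !p_sym, opp_IZR. reflexivity.
  - replace (- k + 1)%Z with (- (k - 1))%Z by ring. rewrite !p_sym, opp_IZR, Ropp_involutive. reflexivity.
  - lia.
Qed.

Lemma ex_half f : summ f -> ex_series (fun n => f (Z.of_nat n)).
Proof. intros H. apply (proj1 (summ_ex f H)). Qed.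

Lemma h_sum t : 0 < t -> t / (t + 2) <= sumZ (h t).
Proof.
  intros Ht. assert (Ht' : 0 <= t) by lra.
  rewrite (sumZ_even (h t) (h_summ t Ht) (h_even t)).
  assert (Hh0 : h t 0%Z = 0) by (unfold h; simpl; field; split; [lra | apply Rgt_not_eq, p_pos; auto]).
  rewrite Hh0.
  set (lam := t / (2 * (t + 2))).
  assert (Hlam : 0 < lam) by (unfold lam; apply Rdiv_lt_0_compat; lra).
  set (fA := fun k => IZR k ^ 2 * P t k).
  set (fB := fun k => IZR k ^ 2 * P t (k - 1)%Z).
  assert (SA : summ fA) by (apply summ_uP; auto; apply PF_pow2, PF_IZR).
  assert (SB : summ fB).
  { apply (summ_ext _ (fun k => (fun j => (IZR j + 1) ^ 2 * P t j) (k - 1)%Z)).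
    intros k. unfold fB. cbv beta. rewrite minus_IZR. f_equal. ring.
    apply (summ_shiftm (fun j => (IZR j + 1) ^ 2 * P t j)). apply summ_uP; auto. apply PF_pow2. apply PF_plus. apply PF_IZR. apply PF_const. }
  set (A := Series (fun n => fA (Z.of_nat n))).
  set (B := Series (fun n => fB (Z.of_nat n))).
  assert (HA : A = t / 2).
  { pose proof (S2 t Ht') as E. fold fA in E. rewrite sumZ_even in E; auto.
    2: { intros k. unfold fA. rewrite opp_IZR, p_sym. ring. }
    unfold fA at 2 in E. simpl in E. fold A in E. lra. }
  assert (HB : B <= t + 2).
  { unfold B. rewrite Series_incr_1 by (apply ex_half; auto).
    unfold fB at 1. replace (IZR (Z.of_nat 0) ^ 2 * P t (Z.of_nat 0 - 1)) with 0 by (simpl; ring). rewrite Rplus_0_l.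
    apply Rle_trans with (Series (fun n => 2 * fA (Z.of_nat n) + 2 * P t (Z.of_nat n))).
    - apply Series_le_gen.
      + apply (exR_incr1 (fun n => fB (Z.of_nat n))). apply ex_half; auto.
      + apply ex_series_lin; apply ex_half; auto. apply p_summ; auto.
      + intros n. unfold fB, fA. replace (Z.of_nat (S n) - 1)%Z with (Z.of_nat n) by lia.
        rewrite <- !INR_IZR_INZ. rewrite S_INR. pose proof (p_nonneg t (Z.of_nat n) Ht').
        pose proof (pos_INR n). assert ((INR n + 1) ^ 2 <= 2 * INR n ^ 2 + 2) by (pose proof (pow2_ge_0 (INR n - 1)); nra). apply Rmult_le_compat_r with (r := P t (Z.of_nat n)) in H1; auto. lra.
    - rewrite Series_plus, !Series_scal_l. fold A. rewrite HA.
      pose proof (half_le_sumZ (P t) (p_summ t Ht') (fun k => p_nonneg t k Ht')). rewrite S0 in H by auto. lra.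
      apply ex_series_scalR, ex_half; auto. apply ex_series_scalR, ex_half, p_summ; auto. }
  assert (Hlow : 2 / t * (2 * lam * A - lam ^ 2 * B) <= Series (fun n => h t (Z.of_nat n))).
  { unfold A, B. rewrite <- !Series_scal_l. rewrite <- Series_minus. rewrite <- Series_scal_l.
    apply Series_le_gen.
    - apply ex_series_scalR. apply (ex_series_ext (fun n => 1 * (2 * lam * fA (Z.of_nat n)) + (-1) * (lam ^ 2 * fB (Z.of_nat n)))).
      intros n; simpl; ring. apply ex_series_lin; apply ex_series_scalR; apply ex_half; auto.
    - apply ex_half, h_summ; auto.
    - intros n. unfold h, fA, fB. destruct (Z_le_gt_dec 0 (Z.of_nat n)); [|lia].
      pose proof (p_pos t (Z.of_nat n - 1) Ht). pose proof (p_pos t (Z.of_nat n) Ht).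
      set (a := IZR (Z.of_nat n)). set (x := P t (Z.of_nat n)). set (q := P t (Z.of_nat n - 1)).
      assert (Hq : 0 < q) by (unfold q; apply p_pos; auto). assert (E : 2 / t * (a * x) ^ 2 / q - 2 / t * (2 * lam * (a ^ 2 * x) - lam ^ 2 * (a ^ 2 * q))
                  = 2 / t * (a ^ 2 * (x - lam * q) ^ 2 / q)) by (field; split; apply Rgt_not_eq; lra).
      assert (0 <= 2 / t * (a ^ 2 * (x - lam * q) ^ 2 / q)).
      { apply Rmult_le_pos. left; apply Rdiv_lt_0_compat; lra.
        apply Rmult_le_pos. apply Rmult_le_pos; apply pow2_ge_0. left; apply Rinv_0_lt_compat; auto. }
      lra.
    - apply ex_series_scalR, ex_half; auto.
    - apply ex_series_scalR, ex_half; auto. }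
  assert (2 / t * (2 * lam * A - lam ^ 2 * B) >= t / (2 * (t + 2))).
  { rewrite HA. assert (lam ^ 2 * B <= lam ^ 2 * (t + 2)) by (apply Rmult_le_compat_l; auto; apply pow2_ge_0).
    assert (E : 2 / t * (2 * lam * (t / 2) - lam ^ 2 * (t + 2)) = t / (2 * (t + 2))) by (unfold lam; field; lra).
    assert (2 / t * (2 * lam * (t / 2) - lam ^ 2 * B) >= 2 / t * (2 * lam * (t / 2) - lam ^ 2 * (t + 2))).
    { apply Rle_ge. apply Rmult_le_compat_l. left; apply Rdiv_lt_0_compat; lra. lra. }
    lra. }
  assert (E2 : t / (t + 2) = 2 * (t / (2 * (t + 2)))) by (field; lra). lra.
Qed.

Lemma PF_G' t : 0 < t -> PF (G t).
Proof. intros. apply PF_G; auto. Qed.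

Lemma PF_Zf t : PF (fun k => IZR k ^ 2 - t).
Proof. apply PF_minus. apply PF_pow2, PF_IZR. apply PF_const. Qed.

Lemma S_ZP t : 0 <= t -> sumZ (fun k => (IZR k ^ 2 - t) * P t k) = 0.
Proof.
  intros Ht. rewrite (sumZ_ext _ (fun k => 1 * (IZR k ^ 2 * P t k) + (- t) * P t k)) by (intros; ring).
  rewrite sumZ_lin. rewrite S2, S0 by auto. ring.
  apply summ_uP; auto. apply PF_pow2, PF_IZR. apply p_summ; auto.
Qed.

Lemma S_Z2P t : 0 <= t -> sumZ (fun k => (IZR k ^ 2 - t) ^ 2 * P t k) = 2 * t ^ 2 + t.
Proof.
  intros Ht.
  assert (H4 : summ (fun k => IZR k ^ 4 * P t k)).
  { apply summ_uP; auto. apply (PF_ext _ (fun k => IZR k ^ 2 * IZR k ^ 2)). intros; ring.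
    apply PF_mult; apply PF_pow2, PF_IZR. }
  assert (H2 : summ (fun k => IZR k ^ 2 * P t k)) by (apply summ_uP; auto; apply PF_pow2, PF_IZR).
  rewrite (sumZ_ext _ (fun k => 1 * (1 * (IZR k ^ 4 * P t k) + (- 2 * t) * (IZR k ^ 2 * P t k)) + (t ^ 2) * P t k)) by (intros; ring).
  rewrite sumZ_lin. rewrite sumZ_lin; auto. rewrite S4, S2, S0 by auto. ring.
  apply summ_lin; auto. apply p_summ; auto.
Qed.

Lemma B_sum t : 0 < t -> sumZ (fun j => (G t (j + 1)%Z - G t j) * P t j) <= 0.
Proof.
  intros Ht. assert (Ht' : 0 <= t) by lra.
  apply Rle_trans with (sumZ (fun j => P t (j + 1)%Z - P t j)).
  - apply sumZ_le.
    + apply summ_uP; auto. apply PF_minus. apply PF_shp, PF_G'; auto. apply PF_G'; auto.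
    + apply summ_minus. apply (summ_shiftp (P t)), p_summ; auto. apply p_summ; auto.
    + intros j. unfold G. pose proof (key_ln (P t j) (P t (j + 1)%Z) (p_pos t j Ht) (p_pos t _ Ht)). lra.
  - rewrite sumZ_minus. rewrite (sumZ_shift (P t)) by (apply p_summ; auto). lra.
    apply (summ_shiftp (P t)), p_summ; auto. apply p_summ; auto.
Qed.

Lemma C_sum t : 0 < t -> sumZ (fun j => (G t (j - 1)%Z - G t j) * P t j) <= 0.
Proof.
  intros Ht. assert (Ht' : 0 <= t) by lra.
  apply Rle_trans with (sumZ (fun j => P t (j - 1)%Z - P t j)).
  - apply sumZ_le.
    + apply summ_uP; auto. apply PF_minus. apply PF_shm, PF_G'; auto. apply PF_G'; auto.
    + apply summ_minus. apply (summ_shiftm (P t)), p_summ; auto. apply p_summ; auto.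
    + intros j. unfold G. pose proof (key_ln (P t j) (P t (j - 1)%Z) (p_pos t j Ht) (p_pos t _ Ht)). lra.
  - rewrite sumZ_minus. rewrite (sumZ_shiftm (P t)) by (apply p_summ; auto). lra.
    apply (summ_shiftm (P t)), p_summ; auto. apply p_summ; auto.
Qed.

Lemma S_ZGP t : 0 < t -> sumZ (fun k => (IZR k ^ 2 - t) * G t k * P t k) <= - (t / 2) * (t / (t + 2)).
Proof.
  intros Ht. assert (Ht' : 0 <= t) by lra.
  set (v := fun k => IZR k * G t k).
  assert (Hv : PF v) by (apply PF_mult; [apply PF_IZR | apply PF_G'; auto]).
  assert (SGP : summ (fun k => G t k * P t k)) by (apply summ_uP; auto; apply PF_G'; auto).
  assert (SKGP : summ (fun k => v k * IZR k * P t k)).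
  { apply (summ_ext _ (fun k => (v k * IZR k) * P t k)). intros; ring.
    apply summ_uP; auto. apply PF_mult; auto. apply PF_IZR. }
  assert (SW : summ (fun j => (v (j + 1)%Z - v (j - 1)%Z) * P t j)).
  { apply summ_uP; auto. apply PF_minus. apply PF_shp; auto. apply PF_shm; auto. }
  rewrite (sumZ_ext _ (fun k => 1 * (v k * IZR k * P t k) + (- t) * (G t k * P t k))).
  2: { intros k. unfold v. ring. }
  rewrite sumZ_lin by auto. rewrite stein_sum by auto.
  set (A := fun j => IZR j * (G t (j + 1)%Z - G t (j - 1)%Z) * P t j).
  set (Bf := fun j => (G t (j + 1)%Z - G t j) * P t j).
  set (Cf := fun j => (G t (j - 1)%Z - G t j) * P t j).
  assert (SA : summ A).
  { apply summ_uP; auto. apply PF_mult. apply PF_IZR. apply PF_minus. apply PF_shp, PF_G'; auto. apply PF_shm, PF_G'; auto. }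
  assert (SB : summ Bf) by (apply summ_uP; auto; apply PF_minus; [apply PF_shp, PF_G'; auto | apply PF_G'; auto]).
  assert (SC : summ Cf) by (apply summ_uP; auto; apply PF_minus; [apply PF_shm, PF_G'; auto | apply PF_G'; auto]).
  assert (ED : 1 * (t / 2 * sumZ (fun j => (v (j + 1)%Z - v (j - 1)%Z) * P t j)) + - t * sumZ (fun k => G t k * P t k)
             = t / 2 * (sumZ A + sumZ Bf + sumZ Cf)).
  { rewrite <- !sumZ_plus by (auto; apply summ_plus; auto).
    rewrite (sumZ_ext (fun j => (v (j + 1)%Z - v (j - 1)%Z) * P t j)
               (fun j => 1 * (A j + Bf j + Cf j) + 2 * (G t j * P t j))).
    2: { intros j. unfold v, A, Bf, Cf. rewrite plus_IZR, minus_IZR. ring. }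
    rewrite sumZ_lin by (auto; apply summ_plus; auto; apply summ_plus; auto). field. }
  rewrite ED.
  assert (HA : sumZ A <= - sumZ (h t)).
  { apply Rle_trans with (sumZ (fun j => (-1) * h t j)).
    apply sumZ_le; auto. apply summ_scal, h_summ; auto.
    intros j. unfold A. pose proof (A_le_h t j Ht). lra.
    rewrite sumZ_scal. lra. }
  pose proof (h_sum t Ht). pose proof (B_sum t Ht). pose proof (C_sum t Ht). fold Bf Cf in H0, H1.
  assert (sumZ A + sumZ Bf + sumZ Cf <= - (t / (t + 2))) by lra.
  apply Rmult_le_compat_l with (r := t / 2) in H2; lra.
Qed.

Lemma varent_large t : 1 <= t -> 1 / 108 <= varent (P t).
Proof.
  intros Ht1. assert (Ht : 0 < t) by lra. assert (Ht' : 0 <= t) by lra.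
  unfold varent, varZ, expectZ.
  set (m := sumZ (fun k => P t k * ln (P t k))).
  set (lam := / (18 * t)).
  assert (Hlam : 0 < lam) by (unfold lam; apply Rinv_0_lt_compat; lra).
  set (Zf := fun k => IZR k ^ 2 - t).
  assert (S1 : summ (fun k => Zf k * G t k * P t k)).
  { apply (summ_ext _ (fun k => (Zf k * G t k) * P t k)). intros; ring.
    apply summ_uP; auto. apply PF_mult. apply PF_Zf. apply PF_G'; auto. }
  assert (S2' : summ (fun k => Zf k * P t k)) by (apply summ_uP; auto; apply PF_Zf).
  assert (S3 : summ (fun k => Zf k ^ 2 * P t k)) by (apply summ_uP; auto; apply PF_pow2, PF_Zf).
  assert (SV : summ (fun k => P t k * (ln (P t k) - m) ^ 2)).
  { apply (summ_ext _ (fun k => (G t k - m) ^ 2 * P t k)). intros; unfold G; ring.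
    apply summ_uP; auto. apply PF_pow2. apply PF_minus. apply PF_G'; auto. apply PF_const. }
  apply Rle_trans with (sumZ (fun k => (-2 * lam) * (Zf k * G t k * P t k)
                             + 1 * ((2 * lam * m) * (Zf k * P t k) + (- lam ^ 2) * (Zf k ^ 2 * P t k)))).
  - rewrite sumZ_lin; auto. 2: apply summ_lin; auto.
    rewrite sumZ_lin; auto.
    unfold Zf. rewrite S_ZP, S_Z2P by auto.
    pose proof (S_ZGP t Ht) as X.
    set (x := sumZ (fun k => (IZR k ^ 2 - t) * G t k * P t k)) in *.
    assert (-2 * lam * x >= lam * t ^ 2 / (t + 2)).
    { apply Rmult_le_compat_l with (r := 2 * lam) in X; [|lra].
      assert (E : 2 * lam * (- (t / 2) * (t / (t + 2))) = - (lam * t ^ 2 / (t + 2))) by (field; lra). lra. }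
    assert (E : lam * t ^ 2 / (t + 2) - lam ^ 2 * (2 * t ^ 2 + t) - 1 / 108
                = (t - 1) * (13 * t + 2) / (324 * t * (t + 2))) by (unfold lam; field; lra).
    assert (0 <= (t - 1) * (13 * t + 2) / (324 * t * (t + 2))).
    { apply Rmult_le_pos. apply Rmult_le_pos; lra. left; apply Rinv_0_lt_compat.
      apply Rmult_lt_0_compat; lra. }
    lra.
  - apply sumZ_le; auto.
    + apply summ_lin; auto. apply summ_lin; auto.
    + intros k. unfold G.
      assert (0 <= P t k * (ln (P t k) - m + lam * Zf k) ^ 2) by (apply Rmult_le_pos; [apply p_nonneg; auto | apply pow2_ge_0]).
      nra.
Qed.

Lemma varent_nonneg t : 0 <= t -> 0 <= varent (P t).
Proof.
  intros Ht. unfold varent, varZ, expectZ. apply sumZ_nonneg. intros k.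
  apply Rmult_le_pos. apply p_nonneg; auto. apply pow2_ge_0.
Qed.

Lemma L_bounds t : 0 < t -> 0 <= ln (1 + / sqrt t) <= / sqrt t.
Proof.
  intros Ht. assert (Hs : 0 < sqrt t) by (apply sqrt_lt_R0; auto).
  assert (0 < / sqrt t) by (apply Rinv_0_lt_compat; auto).
  split.
  - rewrite <- ln_1. apply ln_le; lra.
  - pose proof (exp_ineq1_le (/ sqrt t)). apply Rle_trans with (ln (exp (/ sqrt t))). apply ln_le; lra. rewrite ln_exp; lra.
Qed.

Lemma varent_small t : 0 < t -> t <= 1 -> t * ln (1 + / sqrt t) ^ 2 / 6 <= varent (P t).
Proof.
  intros Ht Ht1. assert (Ht' : 0 <= t) by lra.
  unfold varent, varZ, expectZ.
  set (m := sumZ (fun k => P t k * ln (P t k))).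
  assert (SV : summ (fun k => P t k * (ln (P t k) - m) ^ 2)).
  { apply (summ_ext _ (fun k => (G t k - m) ^ 2 * P t k)). intros; unfold G; ring.
    apply summ_uP; auto. apply PF_pow2. apply PF_minus. apply PF_G'; auto. apply PF_const. }
  eapply Rle_trans. 2: apply sumZ_three; auto.
  2: { intros k. apply Rmult_le_pos. apply p_nonneg; auto. apply pow2_ge_0. }
  cbv beta.   replace (ctrw_pmf t (-1)%Z) with (ctrw_pmf t 1%Z) by (rewrite <- p_sym; reflexivity).
  set (P0 := P t 0%Z). set (P1 := P t 1%Z).
  assert (HP0 : exp (- t) <= P0).
  { pose proof (p_lower t 0 Ht'). simpl in H. unfold P0. lra. }
  assert (HP1 : exp (- t) * (t / 2) <= P1).
  { pose proof (p_lower t 1 Ht'). simpl in H. unfold P1. lra. }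
  assert (Hst : P1 <= t / 2 * P0).
  { pose proof (p_stein t 1 Ht') as St. simpl in St. pose proof (p_nonneg t 2 Ht').
    unfold P1, P0. replace (1 - 1)%Z with 0%Z in St by ring. replace (1 + 1)%Z with 2%Z in St by ring.
    assert (0 <= t / 2 * P t 2) by (apply Rmult_le_pos; lra). lra. }
  assert (He : / 3 <= exp (- t)).
  { pose proof exp_le_3. apply Rle_trans with (exp (Ropp 1)).
    rewrite exp_Ropp. apply Rinv_le_contravar. apply exp_pos. auto.
    apply exp_mono_le. lra. }
  assert (HP0p : 0 < P0) by (apply p_pos; auto).
  assert (HP1p : 0 < P1) by (apply p_pos; auto).
  set (a := ln P0 - m). set (b := ln P1 - m).
  set (d := - ln (t / 2)).
  assert (Hab : d <= a - b).
  { unfold a, b, d. assert (ln P1 <= ln (t / 2 * P0)) by (apply ln_le; auto).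
    rewrite ln_mult in H by (auto; lra). lra. }
  set (L := ln (1 + / sqrt t)).
  destruct (L_bounds t Ht) as [HL0 HL1]. fold L in HL0, HL1.
  assert (HLd : L <= d).
  { unfold L, d. rewrite <- ln_Rinv by lra. apply ln_le.
    pose proof (sqrt_lt_R0 t Ht). apply Rplus_lt_le_0_compat. lra. left; apply Rinv_0_lt_compat; auto.
    assert (Hsq : t <= sqrt t).
    { pose proof (sqrt_sqrt t Ht'). assert (sqrt t <= 1). { rewrite <- sqrt_1. apply sqrt_le_1_alt. lra. }
      pose proof (sqrt_lt_R0 t Ht). nra. }
    assert (/ sqrt t <= / t) by (apply Rinv_le_contravar; auto).
    assert (1 <= / t). { rewrite <- Rinv_1. apply Rinv_le_contravar; lra. }
    replace (/ (t / 2)) with (2 * / t) by (field; lra). lra. }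
  assert (Hd2 : L ^ 2 <= (a - b) ^ 2) by (apply pow_incr; lra).
  assert (Hsq2 : (a - b) ^ 2 <= 2 * (a ^ 2 + b ^ 2)) by (pose proof (pow2_ge_0 (a + b)); nra).
  assert (Q0 : t / 3 * a ^ 2 <= P0 * a ^ 2).
  { apply Rmult_le_compat_r. apply pow2_ge_0. assert (t / 3 <= / 3) by lra. lra. }
  assert (Q1 : t / 3 * b ^ 2 <= 2 * (P1 * b ^ 2)).
  { replace (2 * (P1 * b ^ 2)) with ((2 * P1) * b ^ 2) by ring. apply Rmult_le_compat_r. apply pow2_ge_0.
    assert (t / 3 <= exp (- t) * t). { assert (0 <= t) by lra. nra. } lra. }
  assert (t * L ^ 2 / 6 <= t / 3 * (a ^ 2 + b ^ 2)).
  { assert (0 <= t / 6) by lra. assert (t / 6 * L ^ 2 <= t / 6 * (2 * (a ^ 2 + b ^ 2))) by (apply Rmult_le_compat_l; lra). lra. }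
  lra.
Qed.

Theorem lemma5_proved :
  exists c : R, 0 < c /\
    forall t : R, 0 <= t -> varent (ctrw_pmf t) >= c * calV t.
Proof.
  exists (1 / 108). split. lra.
  intros t Ht. unfold calV. destruct (Req_EM_T t 0).
  - subst. rewrite Rmult_0_r. apply Rle_ge. apply varent_nonneg. lra.
  - assert (Htp : 0 < t) by lra.
    destruct (L_bounds t Htp) as [HL0 HL1].
    assert (0 <= t * ln (1 + / sqrt t) ^ 2) by (apply Rmult_le_pos; [lra | apply pow2_ge_0]).
    destruct (Rle_dec t 1).
    + pose proof (varent_small t Htp r). lra.
    + pose proof (varent_large t ltac:(lra)).
      assert (ln (1 + / sqrt t) ^ 2 <= / t).
      { rewrite <- (sqrt_sqrt t) at 2 by lra. rewrite Rinv_mult. simpl. rewrite Rmult_1_r.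
        apply Rmult_le_compat; auto. }
      assert (t * ln (1 + / sqrt t) ^ 2 <= 1).
      { apply Rle_trans with (t * / t). apply Rmult_le_compat_l; lra. right; field; lra. }
      lra.
Qed.


Theorem lemma5 :
  exists c : R, 0 < c /\
    forall t : R, 0 <= t -> varent (ctrw_pmf t) >= c * calV t.
Proof. exact lemma5_proved. Qed.
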